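(* Let $L\ge 1$, let $\mathbf a\in\mathbb Z^L\setminus\{\mathbf 0\}$, let $\mathbf h_1,\ldots,\mathbf h_M\in\mathbb R^L\setminus\{\mathbf 0\}$ be channel states with probabilities $f_1,\ldots,f_M>0$, $\sum_m f_m=1$, and let $\bar P>0$. For $m=1,\ldots,M$ and $P\ge 0$ put $$R_m(P)=\tfrac12\log_2\frac{1+P\|\mathbf h_m\|^2}{\|\mathbf a\|^2+P\big(\|\mathbf h_m\|^2\|\mathbf a\|^2-(\mathbf h_m^T\mathbf a)^2\big)} ,$$ and consider the problem $DP1^{(s)}$: maximize $\sum_{m=1}^M f_m\max(0,R_m(P_m))$ over $P_1,\ldots,P_M$ subject to $\sum_{m=1}^M f_mP_m\le\bar P$ and $P_m\ge 0$ for all $m$. Let $\mathcal G=\{m:\|\mathbf h_m\|^2>\|\mathbf h_m\|^2\|\mathbf a\|^2-(\mathbf h_m^T\mathbf a)^2\}$ (the good set). For $\lambda>0$ define $P_m^{KKT}(\lambda)=\frac1\lambda-\frac1{\|\mathbf h_m\|^2}$ if $\mathbf h_m$ is collinear with $\mathbf a$, and otherwise $$P_m^{KKT}(\lambda)=\frac{-b_m+\sqrt{b_m^2-4d_mc_m(\lambda)}}{2d_m},$$ where $d_m=\|\mathbf h_m\|^2(\|\mathbf h_m\|^2\|\mathbf a\|^2-(\mathbf h_m^T\mathbf a)^2)$, $b_m=2\|\mathbf h_m\|^2\|\mathbf a\|^2-(\mathbf h_m^T\mathbf a)^2$, $c_m(\lambda)=\|\mathbf a\|^2-\frac{(\mathbf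 h_m^T\mathbf a)^2}{\lambda}$. Let $$\lambda_o=\min\Big\{\lambda>0\;\Big|\;R_m(P_m^{KKT}(\lambda))=R_m'(P_m^{KKT}(\lambda))\,P_m^{KKT}(\lambda)\text{ for some } m\in\mathcal G\Big\}$$ and $\bar P_o=\sum_{m\in\mathcal G}f_mP_m^{KKT}(\lambda_o)$. If $\bar P>\bar P_o$, then the optimal active set of $DP1^{(s)}$ equals $\mathcal G$, i.e., every optimal solution $(P_1^*,\ldots,P_M^* )$ satisfies $\{m: P_m^*>0\}=\mathcal G$.
   Context: Two nonzero vectors $\mathbf x_1,\mathbf x_2$ are collinear if $\mathbf x_1=c\,\mathbf x_2$ for some real $c$. The active set of a feasible solution $(P_1,\ldots,P_M)$ of $DP1^{(s)}$ is $\{m\in\{1,\ldots,M\}: P_m>0\}$; an optimal active set is the active set of an optimal solution. $R_m'$ denotes the derivative of $R_m$ in $P$. This is the symmetric power allocation policy (all $L$ users use the same power $P_m$ in state $m$) for compute-and-forward over a fading channel with unit-variance noise. *)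

(* Defs.v *)
From Stdlib Require Import Reals Lra ZArith ClassicalDescription.
From Coquelicot Require Import Coquelicot.
Open Scope R_scope.

Fixpoint sumR (n : nat) (F : nat -> R) : R :=
  match n with O => 0 | S k => sumR k F + F k end.

(* vectors in R^L are functions nat -> R, only indices i < L matter *)
Definition dot (L : nat) (x y : nat -> R) : R := sumR L (fun i => x i * y i).
Definition nrm2 (L : nat) (x : nat -> R) : R := dot L x x.

Definition vnonzero (L : nat) (x : nat -> R) : Prop := exists i, (i < L)%nat /\ x i <> 0.

Definition collinear (L : nat) (x1 x2 : nat -> R) : Prop :=
  exists c : R, forall i, (i < L)%nat -> x1 i = c * x2 i.

Definition log2 (x : R) : R := ln x / ln 2.

Section CF.
Variables (L : nat) (a : nat -> Z) (h : nat -> nat -> R).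

Definition av : nat -> R := fun i => IZR (a i).

Definition gap (m : nat) : R :=
  nrm2 L (h m) * nrm2 L av - (dot L (h m) av) ^ 2.

Definition Rm (m : nat) (P : R) : R :=
  / 2 * log2 ((1 + P * nrm2 L (h m)) / (nrm2 L av + P * gap m)).

Definition good (m : nat) : Prop := nrm2 L (h m) > gap m.

Definition dm (m : nat) : R := nrm2 L (h m) * gap m.
Definition bm (m : nat) : R := 2 * nrm2 L (h m) * nrm2 L av - (dot L (h m) av) ^ 2.
Definition cm (m : nat) (lam : R) : R := nrm2 L av - (dot L (h m) av) ^ 2 / lam.

Definition PKKT (m : nat) (lam : R) : R :=
  if excluded_middle_informative (collinear L (h m) av)
  then / lam - / nrm2 L (h m)
  else (- bm m + sqrt (bm m ^ 2 - 4 * dm m * cm m lam)) / (2 * dm m).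

Definition lam_set (M : nat) (lam : R) : Prop :=
  lam > 0 /\
  exists m, (m < M)%nat /\ good m /\
    Rm m (PKKT m lam) = Derive (Rm m) (PKKT m lam) * PKKT m lam.

Definition is_min_lam (M : nat) (lo : R) : Prop :=
  lam_set M lo /\ forall lam, lam_set M lam -> lo <= lam.

Definition Pbar_o (M : nat) (f : nat -> R) (lo : R) : R :=
  sumR M (fun m => if excluded_middle_informative (good m)
                   then f m * PKKT m lo else 0).

Definition objective (M : nat) (f : nat -> R) (P : nat -> R) : R :=
  sumR M (fun m => f m * Rmax 0 (Rm m (P m))).

Definition feasible (M : nat) (f : nat -> R) (Pbar : R) (P : nat -> R) : Prop :=
  sumR M (fun m => f m * P m) <= Pbar /\ forall m, (m < M)%nat -> 0 <= P m.

Definition optimal (M : nat) (f : nat -> R) (Pbar : R) (P : nat -> R) : Prop :=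
  feasible M f Pbar P /\
  forall Q, feasible M f Pbar Q -> objective M f Q <= objective M f P.

End CF.

(* Main.v *)
Require Import Defs.
From Stdlib Require Import Reals ZArith Lra Lia ClassicalDescription Ranalysis5.
From Coquelicot Require Import Coquelicot.
Open Scope R_scope.

Definition Rg (H A G P : R) : R := / 2 * log2 ((1 + P * H) / (A + P * G)).
Definition dRg (H A G P : R) : R := (H*A - G) / ((1 + P*H) * (A + P*G)) / (2 * ln 2).

Lemma ln2_pos : 0 < ln 2.
Proof. rewrite <- ln_1. apply ln_increasing; lra. Qed.

Lemma G1 H A G P : 0 < H -> 1 <= A -> 0 <= G -> 0 <= P -> is_derive (Rg H A G) P (dRg H A G P).
Proof.
intros. unfold Rg, dRg, log2. assert (0 < ln 2) by apply ln2_pos.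
assert (0 < 1 + P*H) by nra. assert (0 < A + P*G) by nra.
auto_derive.
- split; [lra|split; [|auto]]. apply Rdiv_lt_0_compat; lra.
- field. repeat split; lra.
Qed.

Lemma ND_lt H A G x y : 0 < H -> 1 <= A -> 0 <= G -> 0 <= x -> x < y ->
  (1 + x*H) * (A + x*G) < (1 + y*H) * (A + y*G).
Proof. intros. assert (x*G <= y*G) by nra. assert (x*H < y*H) by nra.
assert (0 <= x*H) by nra. assert (0 <= x * G) by nra.
apply Rle_lt_trans with ((1 + x*H) * (A + y*G)).
apply Rmult_le_compat_l; lra. apply Rmult_lt_compat_r; lra. Qed.

Lemma dRg_lt H A G x y : 0 < H -> 1 <= A -> 0 <= G -> 0 < H*A - G -> 0 <= x -> x < y ->
  dRg H A G y < dRg H A G x.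
Proof.
intros. unfold dRg. assert (0 < ln 2) by apply ln2_pos.
assert (Hl := ND_lt H A G x y H0 H1 H2 H4 H5).
assert (0 < (1 + x*H) * (A + x*G)) by (apply Rmult_lt_0_compat; nra).
unfold Rdiv. apply Rmult_lt_compat_r. apply Rinv_0_lt_compat; lra.
apply Rmult_lt_compat_l. lra. apply Rinv_lt_contravar; [apply Rmult_lt_0_compat; lra | exact Hl].
Qed.

Lemma dRg_le H A G x y : 0 < H -> 1 <= A -> 0 <= G -> 0 <= H*A - G -> 0 <= x -> x <= y ->
  dRg H A G y <= dRg H A G x.
Proof.
intros. destruct (Req_dec (H*A-G) 0) as [E|E].
- unfold dRg. rewrite E. unfold Rdiv. rewrite !Rmult_0_l. lra.
- destruct (Req_dec x y). subst; lra. left; apply dRg_lt; lra.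
Qed.

Lemma G2 H A G x Q : 0 < H -> 1 <= A -> 0 <= G -> 0 < H*A - G -> 0 <= x -> 0 <= Q -> x <> Q ->
  Rg H A G x < Rg H A G Q + dRg H A G Q * (x - Q).
Proof.
intros.
assert (D : forall c, 0 <= c -> derivable_pt_lim (Rg H A G) c (dRg H A G c)).
{ intros c Hc. apply is_derive_Reals. apply G1; lra. }
destruct (Rlt_or_le x Q) as [Hlt|Hle].
- destruct (MVT_cor2 (Rg H A G) (dRg H A G) x Q Hlt) as [c [E Hc]].
  { intros c Hc. apply D. lra. }
  assert (dRg H A G Q < dRg H A G c) by (apply dRg_lt; lra).
  assert (0 < (dRg H A G c - dRg H A G Q) * (Q - x)) by (apply Rmult_lt_0_compat; lra).
  nra.
- assert (Hlt : Q < x) by lra.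
  destruct (MVT_cor2 (Rg H A G) (dRg H A G) Q x Hlt) as [c [E Hc]].
  { intros c Hc. apply D. lra. }
  assert (dRg H A G c < dRg H A G Q) by (apply dRg_lt; lra).
  assert (0 < (dRg H A G Q - dRg H A G c) * (x - Q)) by (apply Rmult_lt_0_compat; lra).
  nra.
Qed.

Definition PKn (H A G lam : R) : R :=
  (- (H*A+G) + sqrt ((H*A+G)^2 - 4*(H*G)*(A - (H*A-G)/lam))) / (2*(H*G)).

Definition psi (H A G P : R) : R := Rg H A G P - dRg H A G P * P.

Lemma G4n H A G P lam : 0 < H -> 0 < G -> 1 <= A -> 0 < H*A - G -> 0 <= P ->
  lam = (H*A - G) / ((1 + P*H) * (A + P*G)) -> PKn H A G lam = P.
Proof.
intros. unfold PKn.
assert (0 < 1 + P*H) by nra. assert (0 < A + P*G) by nra.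
assert (E : (H*A+G)^2 - 4*(H*G)*(A - (H*A-G)/lam) = (H*A+G+2*H*G*P)^2).
{ subst lam. field. repeat split; lra. }
rewrite E, sqrt_pow2. field. lra.
assert (0 <= H*G*P) by (apply Rmult_le_pos; nra). nra.
Qed.

Lemma G4c H A P lam : 0 < H -> 1 <= A -> 0 <= P ->
  lam = (H*A - 0) / ((1 + P*H) * (A + P*0)) -> / lam - / H = P.
Proof.
intros. assert (0 < 1 + P*H) by nra. subst lam. field. repeat split; lra.
Qed.

Lemma G5n H A G lam : 0 < H -> 0 < G -> 1 <= A -> 0 < H*A - G -> 0 < lam ->
  0 <= PKn H A G lam ->
  (H*A - G) / ((1 + PKn H A G lam * H) * (A + PKn H A G lam * G)) = lam.
Proof.
intros HH HG HA Hs Hl HQ.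
set (Q := PKn H A G lam) in *.
set (b := H*A+G). set (d := H*G). set (disc := b^2 - 4*d*(A - (H*A-G)/lam)).
assert (Hd : 0 < d) by (unfold d; nra).
assert (Hdisc : disc = (H*A-G)^2 + 4*d*((H*A-G)/lam)) by (unfold disc, b, d; ring).
assert (Hdp : 0 <= disc). { rewrite Hdisc. assert (0 < (H*A-G)/lam) by (apply Rdiv_lt_0_compat; lra). nra. }
set (r := sqrt disc).
assert (Hrr : r * r = disc) by (apply sqrt_sqrt; auto).
assert (HQd : 2*d*Q = r - b) by (unfold Q, PKn, r, disc, b, d; field; lra).
assert (Hq : (1 + Q*H) * (A + Q*G) = (H*A-G)/lam).
{ apply Rmult_eq_reg_l with (4*d); [|lra].
  replace (4*d*((1 + Q*H) * (A + Q*G))) with ((2*d*Q)^2 + 2*b*(2*d*Q) + 4*d*A) by (unfold b, d; ring).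
  rewrite HQd.
  replace ((r - b)^2 + 2*b*(r-b) + 4*d*A) with (r*r - b^2 + 4*d*A) by ring.
  rewrite Hrr. unfold disc. field. lra. }
rewrite Hq. field. split; lra.
Qed.

Lemma G5c H A lam : 0 < H -> 1 <= A -> 0 < lam ->
  (H*A - 0) / ((1 + (/lam - /H) * H) * (A + (/lam - /H) * 0)) = lam.
Proof. intros. field. repeat split; lra. Qed.

Lemma G6n H A G lam : 0 < H -> 0 < G -> 1 <= A -> 0 < H*A - G -> 0 < lam ->
  lam <= (H*A - G) / A -> 0 <= PKn H A G lam.
Proof.
intros. unfold PKn.
assert (A <= (H*A-G)/lam).
{ assert (lam * A <= H*A-G).
  { replace (H*A-G) with ((H*A-G)/A*A) by (field; lra). apply Rmult_le_compat_r; lra. }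
  assert (E: (H*A-G)/lam - A = (H*A-G - lam*A)/lam) by (field; lra).
  assert (0 <= (H*A-G - lam*A)/lam) by (apply Rmult_le_pos; [lra| apply Rlt_le, Rinv_0_lt_compat; lra]).
  lra. }
assert (sqrt ((H*A+G)^2) <= sqrt ((H * A + G) ^ 2 - 4 * (H * G) * (A - (H * A - G) / lam))).
{ apply sqrt_le_1_alt. assert (0 <= H*G) by nra. nra. }
rewrite sqrt_pow2 in H7 by nra.
apply Rmult_le_pos. lra. apply Rlt_le, Rinv_0_lt_compat. nra.
Qed.

Lemma G6c H A lam : 0 < H -> 1 <= A -> 0 < lam ->
  lam <= (H*A - 0) / A -> 0 <= / lam - / H.
Proof.
intros. replace ((H*A-0)/A) with H in H3 by (field; lra).
assert (/H <= /lam) by (apply Rinv_le_contravar; lra). lra.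
Qed.

Lemma inv_le_lo X lo : 0 < lo -> /lo <= X -> / X <= lo.
Proof.
intros. assert (0 < /lo) by (apply Rinv_0_lt_compat; lra).
rewrite <- (Rinv_inv lo). apply Rinv_le_contravar; lra.
Qed.

Lemma G7n H A G K lo : 0 < H -> 0 < G -> 1 <= A -> 0 < H*A - G -> 0 <= K -> 0 < lo ->
  exists eps, 0 < eps /\ eps <= lo /\ K < PKn H A G eps.
Proof.
intros. set (b := H*A+G). set (d := H*G). assert (Hd : 0 < d) by (unfold d; nra).
set (X := (b + 2*d*K + 1)^2 / (4*d*(H*A-G)) + / lo).
assert (0 < /lo) by (apply Rinv_0_lt_compat; lra).
assert (0 <= (b + 2*d*K + 1)^2 / (4*d*(H*A-G))).
{ apply Rmult_le_pos. apply pow2_ge_0. apply Rlt_le, Rinv_0_lt_compat. repeat apply Rmult_lt_0_compat; lra. }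
assert (HX : 0 < X) by (unfold X; lra).
exists (/ X). split; [apply Rinv_0_lt_compat; lra|]. split. apply inv_le_lo; unfold X; lra.
unfold PKn. fold b d. unfold Rdiv at 2. rewrite Rinv_inv.
assert (Hb : 0 < b) by (unfold b; nra).
assert (E : b ^ 2 - 4 * d * (A - (H * A - G) * X) = (H*A-G)^2 + (b + 2*d*K + 1)^2 + 4*d*(H*A-G)*/lo).
{ unfold X, b, d. field. nra. }
rewrite E.
assert (0 <= 4*d*(H*A-G)*/lo) by (apply Rmult_le_pos; [nra|lra]).
assert (sqrt ((b + 2*d*K + 1)^2) <= sqrt ((H*A-G)^2 + (b + 2*d*K + 1)^2 + 4*d*(H*A-G)*/lo)).
{ apply sqrt_le_1_alt. nra. }
rewrite sqrt_pow2 in H9 by nra.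
apply Rmult_lt_reg_r with (2*d). lra. unfold Rdiv. rewrite Rmult_assoc, Rinv_l by lra. nra.
Qed.

Lemma G7c H K lo : 0 < H -> 0 <= K -> 0 < lo ->
  exists eps, 0 < eps /\ eps <= lo /\ K < / eps - / H.
Proof.
intros. assert (0 < /lo) by (apply Rinv_0_lt_compat; lra).
assert (0 < /H) by (apply Rinv_0_lt_compat; lra).
exists (/ (K + /H + 1 + /lo)). split. apply Rinv_0_lt_compat; lra.
split. apply inv_le_lo; lra. rewrite Rinv_inv. lra.
Qed.

Lemma psi_eq H A G P : 0 < H -> 1 <= A -> 0 <= G -> 0 <= P ->
  psi H A G P = (ln ((1+P*H)/(A+P*G)) - (H*A-G)*P/((1+P*H)*(A+P*G))) / (2 * ln 2).
Proof.
intros. assert (0 < ln 2) by apply ln2_pos. assert (0 < 1 + P*H) by nra. assert (0 < A + P*G) by nra.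
unfold psi, Rg, dRg, log2. field. repeat split; lra.
Qed.

Lemma ln_ge y : 0 < y -> 1 - / y <= ln y.
Proof.
intros. assert (Hl := exp_ineq1_le (ln (/ y))). rewrite exp_ln in Hl by (apply Rinv_0_lt_compat; lra).
rewrite ln_Rinv in Hl by lra. lra.
Qed.

Lemma ln3 : 1 <= ln 3.
Proof. rewrite <- (ln_exp 1) at 1. apply ln_le. apply exp_pos. apply exp_le_3. Qed.

Lemma G3 H A G P0 : 0 < H -> 1 <= A -> 0 <= G -> G < H -> 0 <= P0 ->
  exists Pb, P0 < Pb /\ 0 < psi H A G Pb.
Proof.
intros. assert (0 < ln 2) by apply ln2_pos.
destruct (Req_dec G 0) as [G0|Gp].
- subst G. exists (P0 + 3*A/H).
  assert (0 < 3*A/H) by (apply Rdiv_lt_0_compat; lra). split; [lra|].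
  rewrite psi_eq by lra. apply Rdiv_lt_0_compat; [|lra].
  set (Pb := P0 + 3*A/H) in *.
  assert (HN : Pb * H >= 3 * A).
  { unfold Pb. replace ((P0 + 3*A/H)*H) with (P0*H + 3*A) by (field; lra). nra. }
  assert (3 < (1 + Pb*H)/(A + Pb*0)).
  { replace (A + Pb*0) with A by ring. apply Rmult_lt_reg_r with A; [lra|].
    unfold Rdiv. rewrite Rmult_assoc, Rinv_l by lra. lra. }
  assert (ln 3 < ln ((1 + Pb*H)/(A + Pb*0))) by (apply ln_increasing; lra).
  assert (ln3 := ln3).
  assert ((H*A-0)*Pb/((1+Pb*H)*(A+Pb*0)) < 1).
  { replace ((H*A-0)*Pb/((1+Pb*H)*(A+Pb*0))) with (Pb*H/(1+Pb*H)) by (field; nra).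
    apply Rmult_lt_reg_r with (1+Pb*H); [nra|]. unfold Rdiv. rewrite Rmult_assoc, Rinv_l by nra. lra. }
  lra.
- assert (HG : 0 < G) by lra.
  set (s := H*A - G). assert (Hs : 0 < s) by (unfold s; nra).
  set (t := (A - 1 + s/G)/(H-G)).
  assert (Ht : t * (H-G) = A - 1 + s/G) by (unfold t; field; lra).
  assert (0 < s/G) by (apply Rdiv_lt_0_compat; lra).
  assert (0 < t) by (unfold t; apply Rdiv_lt_0_compat; lra).
  exists (P0 + t + 1). split; [lra|].
  set (Pb := P0 + t + 1).
  rewrite psi_eq by (unfold Pb; lra). apply Rdiv_lt_0_compat; [|lra].
  set (N := 1 + Pb*H). set (D := A + Pb*G).
  assert (HX : N - D = (P0+1)*(H-G) + s/G) by (unfold N, D, Pb; nra).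
  assert (HGX : G * (N - D) > s).
  { rewrite HX. replace (G * ((P0+1)*(H-G) + s/G)) with (G*(P0+1)*(H-G) + s) by (field; lra).
    assert (0 < G*(P0+1)*(H-G)) by (repeat apply Rmult_lt_0_compat; lra). lra. }
  assert (HPb : 0 < Pb) by (unfold Pb; lra).
  assert (HD : D >= Pb * G) by (unfold D; lra).
  assert (HDp : 0 < D) by (unfold D; nra).
  assert (HNp : 0 < N) by (unfold N; nra).
  assert (Hk : D * (N - D) > s * Pb).
  { assert (0 < N - D) by nra.
    apply Rge_gt_trans with (Pb * G * (N - D)). apply Rmult_ge_compat_r; lra. nra. }
  assert (Hln := ln_ge (N/D) ltac:(apply Rdiv_lt_0_compat; lra)).
  replace (/ (N/D)) with (D/N) in Hln by (field; lra).
  assert (E : 1 - D/N - s*Pb/(N*D) = (D*(N-D) - s*Pb)/(N*D)) by (field; lra).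
  assert (0 < (D*(N-D) - s*Pb)/(N*D)) by (apply Rdiv_lt_0_compat; nra).
  fold s. lra.
Qed.

Lemma exd_cont (f : R -> R) x : ex_derive f x -> continuity_pt f x.
Proof. intros. apply continuity_pt_filterlim. apply (ex_derive_continuous (K:=R_AbsRing) (V:=R_NormedModule)). auto. Qed.

Lemma G8n H A G lam : 0 < H -> 0 < G -> 1 <= A -> 0 < H*A - G -> 0 < lam ->
  continuity_pt (PKn H A G) lam.
Proof.
intros. apply exd_cont. unfold PKn.
assert (0 < (H*A-G)/lam) by (apply Rdiv_lt_0_compat; lra).
assert (0 < H*G) by nra.
auto_derive. split; [lra|split; [|auto]].
replace ((H*A+G)^2 - 4*(H*G)*(A - (H*A-G)/lam)) with ((H*A-G)^2 + 4*(H*G)*((H*A-G)/lam)) by ring.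
nra.
Qed.

Lemma G8c H lam : 0 < lam -> continuity_pt (fun l => / l - / H) lam.
Proof.
intros. apply exd_cont. auto_derive. lra.
Qed.

Lemma log2_nonpos y : 0 < y -> y <= 1 -> / 2 * log2 y <= 0.
Proof.
intros. unfold log2. assert (0 < ln 2) by apply ln2_pos.
assert (ln y <= 0) by (rewrite <- ln_1; apply ln_le; lra).
assert (ln y / ln 2 <= 0). { unfold Rdiv. assert (0 < / ln 2) by (apply Rinv_0_lt_compat; lra). nra. }
lra.
Qed.

Lemma Rg_bad H A G P : 0 <= H -> 1 <= A -> H <= G -> 0 <= P -> Rg H A G P <= 0.
Proof.
intros. unfold Rg. apply log2_nonpos. apply Rdiv_lt_0_compat; nra.
apply Rmult_le_reg_r with (A + P*G). nra. unfold Rdiv. rewrite Rmult_assoc, Rinv_l by nra. nra.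
Qed.

Lemma Rg0 H A G : 1 <= A -> Rg H A G 0 <= 0.
Proof.
intros. unfold Rg. apply log2_nonpos. apply Rdiv_lt_0_compat; lra.
apply Rmult_le_reg_r with (A + 0*G). lra. unfold Rdiv. rewrite Rmult_assoc, Rinv_l by lra. lra.
Qed.

Lemma psi_cont H A G x : 0 < H -> 1 <= A -> 0 <= G -> 0 <= x -> continuity_pt (psi H A G) x.
Proof.
intros. apply exd_cont. unfold psi, Rg, dRg, log2. assert (0 < ln 2) by apply ln2_pos.
assert (0 < 1 + x*H) by nra. assert (0 < A + x*G) by nra.
auto_derive. repeat split; try lra. apply Rdiv_lt_0_compat; lra.
apply Rmult_integral_contrapositive; split; lra.
Qed.

Lemma dRg_nonneg H A G x : 0 < H -> 1 <= A -> 0 <= G -> 0 <= H*A - G -> 0 <= x -> 0 <= dRg H A G x.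
Proof.
intros. unfold dRg. assert (0 < ln 2) by apply ln2_pos.
assert (0 < 1 + x*H) by nra. assert (0 < A + x*G) by nra.
apply Rmult_le_pos; [|apply Rlt_le, Rinv_0_lt_compat; lra].
apply Rmult_le_pos; [lra|apply Rlt_le, Rinv_0_lt_compat; apply Rmult_lt_0_compat; lra].
Qed.

Lemma key H A G Q x : 0 < H -> 1 <= A -> 0 <= G -> 0 < H*A - G -> 0 <= Q -> 0 < psi H A G Q -> 0 <= x ->
  Rmax 0 (Rg H A G x) <= Rg H A G Q + dRg H A G Q * (x - Q) /\
  (x <> Q -> Rmax 0 (Rg H A G x) < Rg H A G Q + dRg H A G Q * (x - Q)).
Proof.
intros. unfold psi in H5.
assert (0 <= dRg H A G Q) by (apply dRg_nonneg; lra).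
assert (0 <= dRg H A G Q * x) by (apply Rmult_le_pos; lra).
assert (S : x <> Q -> Rmax 0 (Rg H A G x) < Rg H A G Q + dRg H A G Q * (x - Q)).
{ intros. assert (Rg H A G x < Rg H A G Q + dRg H A G Q * (x - Q)) by (apply G2; lra).
  apply Rmax_lub_lt; lra. }
split; auto. destruct (Req_dec x Q). subst. apply Rmax_lub. 
assert (0 <= dRg H A G Q * Q) by (apply Rmult_le_pos; lra). lra. lra.
left; auto.
Qed.

Lemma lam_of_dRg H A G x : 1 <= A -> 0 <= H -> 0 <= G -> 0 <= x ->
  (H*A - G) / ((1 + x*H) * (A + x*G)) = dRg H A G x * (2 * ln 2).
Proof. intros. assert (0 < ln 2) by apply ln2_pos. unfold dRg.
assert (0 < 1 + x*H) by nra. assert (0 < A + x*G) by nra. field. repeat split; lra. Qed.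

Lemma sumR_ext n F G : (forall i, (i < n)%nat -> F i = G i) -> sumR n F = sumR n G.
Proof. induction n; cbn [sumR]; intros; auto. rewrite IHn by (intros; apply H; lia). rewrite H by lia. reflexivity. Qed.

Lemma sumR_nonneg n F : (forall i, (i<n)%nat -> 0 <= F i) -> 0 <= sumR n F.
Proof. induction n; cbn [sumR]; intros; [lra|]. assert (0 <= F n) by (apply H; lia).
assert (0 <= sumR n F) by (apply IHn; intros; apply H; lia). lra. Qed.

Lemma sumR_ge_term n F j : (forall i, (i<n)%nat -> 0 <= F i) -> (j<n)%nat -> F j <= sumR n F.
Proof. induction n; intros; [lia|cbn [sumR]]. destruct (Nat.eq_dec j n).
- subst. assert (0 <= sumR n F) by (apply sumR_nonneg; intros; apply H; lia). lra.
- assert (F j <= sumR n F) by (apply IHn; [intros; apply H; lia | lia]).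
  assert (0 <= F n) by (apply H; lia). lra. Qed.

Lemma sumR_zero n F : (forall i, (i<n)%nat -> 0 <= F i) -> sumR n F <= 0 -> forall j, (j<n)%nat -> F j = 0.
Proof. intros. assert (F j <= sumR n F) by (apply sumR_ge_term; auto). assert (0 <= F j) by auto. lra. Qed.

Lemma sumR_plus n F G : sumR n (fun i => F i + G i) = sumR n F + sumR n G.
Proof. induction n; cbn [sumR]; [lra|]. rewrite IHn. ring. Qed.

Lemma sumR_scal n c F : sumR n (fun i => c * F i) = c * sumR n F.
Proof. induction n; cbn [sumR]; [lra|]. rewrite IHn. ring. Qed.

Lemma sumR_minus n F G : sumR n (fun i => F i - G i) = sumR n F - sumR n G.
Proof. induction n; cbn [sumR]; [lra|]. rewrite IHn. ring. Qed.

Lemma sumR_le n F G : (forall i, (i<n)%nat -> F i <= G i) -> sumR n F <= sumR n G.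
Proof. induction n; cbn [sumR]; intros; [lra|]. assert (F n <= G n) by (apply H; lia).
assert (sumR n F <= sumR n G) by (apply IHn; intros; apply H; lia). lra. Qed.

Lemma cs_id n x y t : sumR n (fun i => (x i - t * y i)^2) =
  sumR n (fun i => x i * x i) - 2*t*sumR n (fun i => x i * y i) + t^2 * sumR n (fun i => y i * y i).
Proof. induction n; cbn [sumR]; [ring|]. rewrite IHn. ring. Qed.

Lemma cont_sumR n (F : nat -> R -> R) x : (forall m, (m < n)%nat -> continuity_pt (F m) x) ->
  continuity_pt (fun y => sumR n (fun m => F m y)) x.
Proof.
induction n; intros; cbn [sumR].
- apply continuity_pt_const. intros u v. reflexivity.
- apply (continuity_pt_plus (fun y => sumR n (fun m => F m y)) (F n)).
  apply IHn; intros; apply H; lia. apply H; lia.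
Qed.


Lemma nrm_nonneg L x : 0 <= nrm2 L x.
Proof. unfold nrm2, dot. apply sumR_nonneg. intros. nra. Qed.

Lemma nrm_pos L x : vnonzero L x -> 0 < nrm2 L x.
Proof. intros [i [Hi Hx]]. unfold nrm2, dot.
assert (x i * x i <= sumR L (fun i => x i * x i)) by (apply (sumR_ge_term L (fun i => _ * _) i); auto; intros; nra).
assert (0 < x i * x i) by (apply Rsqr_pos_lt in Hx; unfold Rsqr in Hx; auto). lra. Qed.

Lemma A_ge1 L a : vnonzero L (av a) -> 1 <= nrm2 L (av a).
Proof. intros [i [Hi Hx]]. unfold nrm2, dot.
assert (av a i * av a i <= sumR L (fun i => av a i * av a i)) by (apply (sumR_ge_term L (fun i => _ * _) i); auto; intros; nra).
assert (1 <= av a i * av a i).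
{ unfold av in *. rewrite <- mult_IZR. apply IZR_le.
  assert (a i <> 0%Z) by (intro E; apply Hx; rewrite E; reflexivity). nia. }
lra. Qed.

Lemma gap_eq L a h m : 0 < nrm2 L (av a) ->
  gap L a h m = nrm2 L (av a) * sumR L (fun i => (h m i - (dot L (h m) (av a) / nrm2 L (av a)) * av a i)^2).
Proof. intros. rewrite cs_id. unfold gap, nrm2, dot in *.
field. lra. Qed.

Lemma gap_nonneg L a h m : 0 < nrm2 L (av a) -> 0 <= gap L a h m.
Proof. intros. rewrite gap_eq by auto. apply Rmult_le_pos. lra. apply sumR_nonneg. intros. apply pow2_ge_0. Qed.

Lemma gap_coll L a h m : collinear L (h m) (av a) -> gap L a h m = 0.
Proof. intros [c Hc]. unfold gap, nrm2, dot.
rewrite (sumR_ext L (fun i => h m i * h m i) (fun i => c^2 * (av a i * av a i))) by (intros; rewrite Hc by auto; ring).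
rewrite (sumR_ext L (fun i => h m i * av a i) (fun i => c * (av a i * av a i))) by (intros; rewrite Hc by auto; ring).
rewrite !sumR_scal. ring. Qed.

Lemma gap_ncoll L a h m : 0 < nrm2 L (av a) -> ~ collinear L (h m) (av a) -> 0 < gap L a h m.
Proof. intros HA Hn. destruct (Rle_lt_dec (gap L a h m) 0) as [Hle|]; auto. exfalso. apply Hn.
rewrite gap_eq in Hle by auto.
set (t := dot L (h m) (av a) / nrm2 L (av a)) in *.
assert (sumR L (fun i => (h m i - t * av a i)^2) <= 0).
{ set (S := sumR L _) in *. assert (0 <= S) by (apply sumR_nonneg; intros; apply pow2_ge_0). nra. }
exists t. intros i Hi. assert (E := sumR_zero L _ (fun i _ => pow2_ge_0 _) H i Hi). cbn [sumR] in E.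
assert (h m i - t * av a i = 0) by nra. lra. Qed.

Lemma Rm_eq L a h m : Rm L a h m = Rg (nrm2 L (h m)) (nrm2 L (av a)) (gap L a h m).
Proof. reflexivity. Qed.

Lemma PKKT_eq L a h m lam : PKKT L a h m lam =
  if excluded_middle_informative (collinear L (h m) (av a)) then / lam - / nrm2 L (h m)
  else PKn (nrm2 L (h m)) (nrm2 L (av a)) (gap L a h m) lam.
Proof.
unfold PKKT, PKn, bm, cm, dm. destruct (excluded_middle_informative _); [reflexivity|].
replace (2 * nrm2 L (h m) * nrm2 L (av a) - dot L (h m) (av a) ^ 2) with
  (nrm2 L (h m) * nrm2 L (av a) + gap L a h m) by (unfold gap; ring).
replace (dot L (h m) (av a) ^ 2) with (nrm2 L (h m) * nrm2 L (av a) - gap L a h m) by (unfold gap; ring).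
reflexivity.
Qed.

Lemma PKKT_inv L a h m P : 0 < nrm2 L (h m) -> 1 <= nrm2 L (av a) ->
  0 < nrm2 L (h m) * nrm2 L (av a) - gap L a h m -> 0 <= P ->
  PKKT L a h m ((nrm2 L (h m) * nrm2 L (av a) - gap L a h m) /
     ((1 + P * nrm2 L (h m)) * (nrm2 L (av a) + P * gap L a h m))) = P.
Proof.
intros. rewrite PKKT_eq. destruct (excluded_middle_informative _) as [C|C].
- rewrite (gap_coll L a h m C). apply (G4c _ (nrm2 L (av a))); auto.
- apply G4n; auto. apply gap_ncoll; auto; lra.
Qed.

Lemma PKKT_fwd L a h m lam : 0 < nrm2 L (h m) -> 1 <= nrm2 L (av a) ->
  0 < nrm2 L (h m) * nrm2 L (av a) - gap L a h m -> 0 < lam -> 0 <= PKKT L a h m lam ->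
  (nrm2 L (h m) * nrm2 L (av a) - gap L a h m) /
     ((1 + PKKT L a h m lam * nrm2 L (h m)) * (nrm2 L (av a) + PKKT L a h m lam * gap L a h m)) = lam.
Proof.
intros. rewrite PKKT_eq in *. destruct (excluded_middle_informative _) as [C|C].
- rewrite (gap_coll L a h m C) in *. apply G5c; auto.
- apply G5n; auto. apply gap_ncoll; auto; lra.
Qed.

Lemma PKKT_nonneg L a h m lam : 0 < nrm2 L (h m) -> 1 <= nrm2 L (av a) ->
  0 < nrm2 L (h m) * nrm2 L (av a) - gap L a h m -> 0 < lam ->
  lam <= (nrm2 L (h m) * nrm2 L (av a) - gap L a h m) / nrm2 L (av a) -> 0 <= PKKT L a h m lam.
Proof.
intros. rewrite PKKT_eq. destruct (excluded_middle_informative _) as [C|C].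
- rewrite (gap_coll L a h m C) in *. apply (G6c _ (nrm2 L (av a))); auto.
- apply G6n; auto. apply gap_ncoll; auto; lra.
Qed.

Lemma PKKT_big L a h m K lo : 0 < nrm2 L (h m) -> 1 <= nrm2 L (av a) ->
  0 < nrm2 L (h m) * nrm2 L (av a) - gap L a h m -> 0 <= K -> 0 < lo ->
  exists eps, 0 < eps /\ eps <= lo /\ K < PKKT L a h m eps.
Proof.
intros. destruct (excluded_middle_informative (collinear L (h m) (av a))) as [C|C].
- destruct (G7c (nrm2 L (h m)) K lo) as [e [? [? ?]]]; auto. exists e. split; auto. split; auto.
  rewrite PKKT_eq. destruct (excluded_middle_informative _); [auto|contradiction].
- destruct (G7n (nrm2 L (h m)) (nrm2 L (av a)) (gap L a h m) K lo) as [e [? [? ?]]]; auto.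
  apply gap_ncoll; auto; lra.
  exists e. split; auto. split; auto.
  rewrite PKKT_eq. destruct (excluded_middle_informative _); [contradiction|auto].
Qed.

Lemma PKKT_cont L a h m lam : 0 < nrm2 L (h m) -> 1 <= nrm2 L (av a) ->
  0 < nrm2 L (h m) * nrm2 L (av a) - gap L a h m -> 0 < lam ->
  continuity_pt (PKKT L a h m) lam.
Proof.
intros. destruct (excluded_middle_informative (collinear L (h m) (av a))) as [C|C].
- apply continuity_pt_ext with (fun l => / l - / nrm2 L (h m)). 
  intros; rewrite PKKT_eq; destruct (excluded_middle_informative _); [auto|contradiction].
  apply G8c; auto.
- apply continuity_pt_ext with (PKn (nrm2 L (h m)) (nrm2 L (av a)) (gap L a h m)).
  intros; rewrite PKKT_eq; destruct (excluded_middle_informative _); [contradiction|auto].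
  apply G8n; auto. apply gap_ncoll; auto; lra.
Qed.

Lemma Tan L a h M lo m P : is_min_lam L a h M lo -> (m < M)%nat -> good L a h m ->
  0 < nrm2 L (h m) -> 1 <= nrm2 L (av a) -> 0 <= P ->
  psi (nrm2 L (h m)) (nrm2 L (av a)) (gap L a h m) P <= 0 ->
  lo <= (nrm2 L (h m) * nrm2 L (av a) - gap L a h m) /
     ((1 + P * nrm2 L (h m)) * (nrm2 L (av a) + P * gap L a h m)).
Proof.
intros Hmin HmM Hg HH HA HP Hpsi.
assert (HG0 : 0 <= gap L a h m) by (apply gap_nonneg; lra).
set (H := nrm2 L (h m)) in *. set (A := nrm2 L (av a)) in *. set (G := gap L a h m) in *.
assert (HGH : G < H) by exact Hg.
assert (Hs : 0 < H*A - G) by nra.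
assert (exists P', P <= P' /\ psi H A G P' = 0) as [P' [HPP' Hz]].
{ destruct (Req_dec (psi H A G P) 0) as [E|E]. exists P; split; [lra|auto].
  destruct (G3 H A G P) as [Pb [HPb Hpb]]; auto.
  destruct (IVT_interv (psi H A G) P Pb) as [z [Hz1 Hz2]]; auto.
  intros; apply psi_cont; lra. lra. exists z; split; [lra|auto]. }
set (lam' := (H*A - G) / ((1 + P'*H) * (A + P'*G))).
assert (Hlam : 0 < lam') by (unfold lam'; apply Rdiv_lt_0_compat; [lra|apply Rmult_lt_0_compat; nra]).
assert (Hin : lam_set L a h M lam').
{ split; auto. exists m. split; auto. split; auto.
  assert (E : PKKT L a h m lam' = P') by (apply PKKT_inv; auto; lra).
  rewrite E. change (Rm L a h m) with (Rg H A G).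
  rewrite (is_derive_unique _ _ _ (G1 H A G P' HH HA HG0 ltac:(lra))).
  unfold psi in Hz. lra. }
destruct Hmin as [_ Hmin]. assert (lo <= lam') by (apply Hmin; auto).
unfold lam' in H0. rewrite lam_of_dRg in * by lra.
assert (dRg H A G P' <= dRg H A G P) by (apply dRg_le; lra).
assert (0 < ln 2) by apply ln2_pos. nra.
Qed.

Lemma good_facts L a h m : vnonzero L (h m) -> 1 <= nrm2 L (av a) -> good L a h m ->
  0 < nrm2 L (h m) /\ 0 <= gap L a h m /\ 0 < nrm2 L (h m) * nrm2 L (av a) - gap L a h m.
Proof.
intros. assert (0 < nrm2 L (h m)) by (apply nrm_pos; auto).
assert (0 <= gap L a h m) by (apply gap_nonneg; lra).
unfold good in H1. split; auto. split; auto. nra.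
Qed.

Lemma psi0 H A G : 1 <= A -> psi H A G 0 <= 0.
Proof. intros. unfold psi. rewrite Rmult_0_r, Rminus_0_r. apply Rg0; auto. Qed.

Theorem theorem2 (L M : nat) (a : nat -> Z) (h : nat -> nat -> R)
  (f : nat -> R) (Pbar lo : R) :
  (1 <= L)%nat ->
  vnonzero L (av a) ->
  (forall m, (m < M)%nat -> vnonzero L (h m)) ->
  (forall m, (m < M)%nat -> f m > 0) ->
  sumR M f = 1 ->
  Pbar > 0 ->
  is_min_lam L a h M lo ->
  Pbar > Pbar_o L a h M f lo ->
  forall P : nat -> R, optimal L a h M f Pbar P ->
    forall m, (m < M)%nat -> (P m > 0 <-> good L a h m).
Proof.
intros HL Ha Hh Hf Hsum HPbar Hmin HPo P Hopt m Hm.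
assert (HA : 1 <= nrm2 L (av a)) by (apply A_ge1; auto).
pose proof Hmin as [[Hlo [m0 [Hm0 [Hg0 _]]]] Hmin'].
assert (ln2p : 0 < ln 2) by apply ln2_pos.
assert (St1 : forall k, (k < M)%nat -> good L a h k ->
  lo <= (nrm2 L (h k) * nrm2 L (av a) - gap L a h k) / nrm2 L (av a)).
{ intros k Hk Hgk. destruct (good_facts L a h k (Hh k Hk) HA Hgk) as [? [? ?]].
  assert (T := Tan L a h M lo k 0 Hmin Hk Hgk H HA ltac:(lra) (psi0 _ _ _ HA)).
  replace ((1 + 0 * nrm2 L (h k)) * (nrm2 L (av a) + 0 * gap L a h k)) with (nrm2 L (av a)) in T by ring.
  exact T. }
assert (St2 : forall k lam, (k < M)%nat -> good L a h k -> 0 < lam -> lam <= lo -> 0 <= PKKT L a h k lam).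
{ intros k lam Hk Hgk ? ?. destruct (good_facts L a h k (Hh k Hk) HA Hgk) as [? [? ?]].
  apply PKKT_nonneg; auto. specialize (St1 k Hk Hgk). lra. }
assert (St3 : forall lam, 0 < lam -> continuity_pt (fun l => Pbar_o L a h M f l) lam).
{ intros lam Hl. unfold Pbar_o.
  apply (cont_sumR M (fun k l => if excluded_middle_informative (good L a h k) then f k * PKKT L a h k l else 0)).
  intros k Hk. destruct (excluded_middle_informative (good L a h k)) as [Hgk|Hgk].
  - destruct (good_facts L a h k (Hh k Hk) HA Hgk) as [? [? ?]].
    apply (continuity_pt_mult (fun _ => f k) (PKKT L a h k)).
    apply continuity_pt_const; intros u v; reflexivity.
    apply PKKT_cont; auto.
  - apply continuity_pt_const; intros u v; reflexivity. }
assert (Spos : forall lam, 0 < lam -> lam <= lo -> forall k, (k < M)%nat ->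
   0 <= (if excluded_middle_informative (good L a h k) then f k * PKKT L a h k lam else 0)).
{ intros lam ? ? k Hk. destruct (excluded_middle_informative (good L a h k)); [|lra].
  apply Rmult_le_pos. specialize (Hf k Hk); lra. apply St2; auto. }
destruct (good_facts L a h m0 (Hh m0 Hm0) HA Hg0) as [Hm0a [Hm0b Hm0c]].
assert (Hfm0 := Hf m0 Hm0).
destruct (PKKT_big L a h m0 (Pbar / f m0) lo) as [eps [He1 [He2 He3]]]; auto.
{ apply Rlt_le, Rdiv_lt_0_compat; lra. }
assert (Heps : Pbar < Pbar_o L a h M f eps).
{ unfold Pbar_o.
  assert (T := sumR_ge_term M (fun k => if excluded_middle_informative (good L a h k) then f k * PKKT L a h k eps else 0) m0 (Spos eps He1 He2) Hm0).
  cbv beta in T. destruct (excluded_middle_informative (good L a h m0)); [|contradiction].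
  assert (Pbar = f m0 * (Pbar / f m0)) by (field; lra).
  assert (f m0 * (Pbar / f m0) < f m0 * PKKT L a h m0 eps) by (apply Rmult_lt_compat_l; lra).
  lra. }
assert (Hel : eps < lo).
{ destruct (Req_dec eps lo); [subst; lra | lra]. }
destruct (IVT_interv (fun l => Pbar - Pbar_o L a h M f l) eps lo) as [ls [Hls1 Hls2]]; auto.
{ intros x Hx. apply (continuity_pt_minus (fun _ => Pbar) (fun l => Pbar_o L a h M f l)).
  apply continuity_pt_const; intros u v; reflexivity. apply St3; lra. }
{ lra. } { lra. }
cbv beta in Hls2.
assert (Hls : ls < lo). { destruct (Req_dec ls lo); [subst; lra|lra]. }
assert (Hls0 : 0 < ls) by lra.
assert (St6 : forall k, (k < M)%nat -> good L a h k ->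
  0 <= PKKT L a h k ls /\
  dRg (nrm2 L (h k)) (nrm2 L (av a)) (gap L a h k) (PKKT L a h k ls) = ls / (2 * ln 2) /\
  0 < psi (nrm2 L (h k)) (nrm2 L (av a)) (gap L a h k) (PKKT L a h k ls)).
{ intros k Hk Hgk. destruct (good_facts L a h k (Hh k Hk) HA Hgk) as [? [? ?]].
  assert (HQ : 0 <= PKKT L a h k ls) by (apply St2; auto; lra).
  assert (Hfw := PKKT_fwd L a h k ls H HA H1 Hls0 HQ).
  rewrite lam_of_dRg in Hfw by (auto; lra).
  assert (Hd : dRg (nrm2 L (h k)) (nrm2 L (av a)) (gap L a h k) (PKKT L a h k ls) = ls / (2 * ln 2)).
  { apply Rmult_eq_reg_r with (2 * ln 2); [|lra]. rewrite Hfw. field. lra. }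
  split; auto. split; auto.
  destruct (Rlt_or_le 0 (psi (nrm2 L (h k)) (nrm2 L (av a)) (gap L a h k) (PKKT L a h k ls))) as [?|Hp]; auto.
  exfalso. assert (T := Tan L a h M lo k _ Hmin Hk Hgk H HA HQ Hp).
  rewrite lam_of_dRg in T by (auto; lra). rewrite Hd in T.
  replace (ls / (2 * ln 2) * (2 * ln 2)) with ls in T by (field; lra). lra. }
set (mu := ls / (2 * ln 2)).
assert (Hmu : 0 < mu) by (unfold mu; apply Rdiv_lt_0_compat; lra).
set (Qf := fun k => if excluded_middle_informative (good L a h k) then PKKT L a h k ls else 0).
assert (HQg : forall k, good L a h k -> Qf k = PKKT L a h k ls).
{ intros k Hk. unfold Qf. destruct (excluded_middle_informative _); [auto|contradiction]. }
assert (HQb : forall k, ~ good L a h k -> Qf k = 0).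
{ intros k Hk. unfold Qf. destruct (excluded_middle_informative _); [contradiction|auto]. }
assert (HsumQ : sumR M (fun k => f k * Qf k) = Pbar).
{ assert (E : Pbar_o L a h M f ls = Pbar) by lra. rewrite <- E. unfold Pbar_o.
  apply sumR_ext. intros k Hk. unfold Qf. destruct (excluded_middle_informative _); ring. }
destruct Hopt as [[HPs HPnn] Hbest].
assert (HQfeas : feasible M f Pbar Qf).
{ split. lra. intros k Hk. destruct (excluded_middle_informative (good L a h k)) as [Hg|Hg].
  rewrite HQg by auto. apply St2; auto; lra. rewrite HQb by auto. lra. }
assert (Hobj := Hbest Qf HQfeas).
set (X := fun k => if excluded_middle_informative (good L a h k) then f k * Rm L a h k (Qf k) else 0).
assert (HX : sumR M X = objective L a h M f Qf).
{ unfold objective. apply sumR_ext. intros k Hk. unfold X.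
  destruct (excluded_middle_informative (good L a h k)) as [Hg|Hg].
  - destruct (St6 k Hk Hg) as [? [? Hp]]. destruct (good_facts L a h k (Hh k Hk) HA Hg) as [? [? ?]].
    rewrite HQg by auto. rewrite Rmax_right; auto.
    unfold psi in Hp. rewrite Rm_eq.
    assert (0 <= dRg (nrm2 L (h k)) (nrm2 L (av a)) (gap L a h k) (PKKT L a h k ls) * PKKT L a h k ls).
    { apply Rmult_le_pos; auto. apply dRg_nonneg; auto; lra. }
    lra.
  - rewrite HQb by auto. rewrite Rmax_left. ring. rewrite Rm_eq. apply Rg0; auto. }
set (Dl := fun k => (X k + mu * (f k * P k - f k * Qf k)) - f k * Rmax 0 (Rm L a h k (P k))).
assert (HD : sumR M Dl <= 0).
{ unfold Dl. rewrite sumR_minus, sumR_plus, sumR_scal, sumR_minus, HX, HsumQ.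
  unfold objective in *. assert (mu * (sumR M (fun k => f k * P k) - Pbar) <= 0).
  { assert (0 <= mu * (Pbar - sumR M (fun k => f k * P k))) by (apply Rmult_le_pos; lra). lra. }
  lra. }
assert (Kk : forall k, (k < M)%nat -> good L a h k ->
  Rmax 0 (Rm L a h k (P k)) <= Rm L a h k (PKKT L a h k ls) + mu * (P k - PKKT L a h k ls) /\
  (P k <> PKKT L a h k ls ->
   Rmax 0 (Rm L a h k (P k)) < Rm L a h k (PKKT L a h k ls) + mu * (P k - PKKT L a h k ls))).
{ intros k Hk Hg. destruct (St6 k Hk Hg) as [HQ [Hd Hp]].
  destruct (good_facts L a h k (Hh k Hk) HA Hg) as [? [? ?]].
  rewrite !Rm_eq. unfold mu. rewrite <- Hd. apply key; auto. }
assert (Dgood : forall k, (k < M)%nat -> good L a h k -> Dl k =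
  f k * ((Rm L a h k (PKKT L a h k ls) + mu * (P k - PKKT L a h k ls)) - Rmax 0 (Rm L a h k (P k)))).
{ intros k Hk Hg. unfold Dl, X. rewrite HQg by auto.
  destruct (excluded_middle_informative (good L a h k)); [ring|contradiction]. }
assert (Dbad : forall k, (k < M)%nat -> ~ good L a h k -> Dl k = mu * (f k * P k)).
{ intros k Hk Hg. unfold Dl, X. rewrite HQb by auto.
  destruct (excluded_middle_informative (good L a h k)); [contradiction|].
  rewrite Rmax_left. ring. rewrite Rm_eq. apply Rg_bad; auto. apply nrm_nonneg.
  unfold good in Hg. lra. }
assert (HDnn : forall k, (k < M)%nat -> 0 <= Dl k).
{ intros k Hk. assert (Hfk := Hf k Hk). destruct (excluded_middle_informative (good L a h k)) as [Hg|Hg].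
  - rewrite Dgood by auto. destruct (Kk k Hk Hg). apply Rmult_le_pos; lra.
  - rewrite Dbad by auto. assert (0 <= P k) by auto. apply Rmult_le_pos; [lra|]. apply Rmult_le_pos; lra. }
assert (Hz := sumR_zero M Dl HDnn HD m Hm).
assert (Hfm := Hf m Hm).
split.
- intros Hpos. destruct (excluded_middle_informative (good L a h m)) as [Hg|Hg]; auto.
  exfalso. rewrite Dbad in Hz by auto.
  assert (0 < mu * (f m * P m)) by (apply Rmult_lt_0_compat; [lra|apply Rmult_lt_0_compat; lra]). lra.
- intros Hg. destruct (St6 m Hm Hg) as [HQ [Hd Hp]].
  destruct (Req_dec (P m) (PKKT L a h m ls)) as [E|E].
  + rewrite E. destruct (Req_dec (PKKT L a h m ls) 0) as [E0|E0]; [|lra].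
    exfalso. rewrite E0 in Hp. assert (T := psi0 (nrm2 L (h m)) (nrm2 L (av a)) (gap L a h m) HA). lra.
  + exfalso. rewrite Dgood in Hz by auto. destruct (Kk m Hm Hg) as [_ Hs].
    specialize (Hs E).
    assert (0 < f m * ((Rm L a h m (PKKT L a h m ls) + mu * (P m - PKKT L a h m ls)) - Rmax 0 (Rm L a h m (P m))))
      by (apply Rmult_lt_0_compat; lra). lra.
Qed.
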